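(* For $i,j\in I_n$ with $i\ne j$ consider the inequality $$(\ast)_{ij}:\qquad \max\left\{0,\ \frac{a_{ij}}{a_{jj}}\bigl(1-\alpha_jU^{I_n\setminus\{i,j\}}\bigr)\right\}<1-\alpha_iU^{I_n\setminus\{i,j\}}.$$ (i) For any $J\subset I_n$ with $|J|>1$, if condition $(C_i)$ holds for all $i\in J$, then $(\ast)_{ij}$ holds for all $i,j\in J$ with $i\ne j$. (ii) For a fixed $i\in I_n$, if $(\ast)_{ij}$ holds for all $j\in I_n\setminus\{i\}$, then condition $(C_i)$ holds. (iii) Condition $(C_i)$ holds for all $i\in I_n$ if and only if $(\ast)_{ij}$ holds for all $i,j\in I_n$ with $i\ne j$.
   Context: Fix $n\ge 2$ and $I_m=\{1,\dots,m\}$. Consider the Lotka–Volterra system $x_i'=b_ix_i(1-\alpha_ix)$, $i\in I_n$, where $b_i>0$, $\alpha_i=(a_{i1},\dots,a_{in})$ with $a_{ii}>0$ and $a_{ij}\ge 0$, on $\mathbb{R}^n_+$. For $u\le v$ (componentwise), $[u,v]=\{x\in\mathbb{R}^n_+:u\le x\le v\}$. For $J\subset I_n$, $u^J_i=u_i$ for $i\in J$ and $0$ otherwise. $\gamma_i=\{x\in\mathbb{R}^n_+:\alpha_ix=1\}$. Define $U$ componentwise by: $U_i=a_{ii}^{-1}$ if $a_{ii}\le a_{ji}$ or $a_{ij}=0$ for some $j\ne i$; otherwise $U_i=0$ if $a_{ji}<a_{ii}$ and $a_{jk}\le a_{ik}$ for all $j,k\in I_n\setminus\{i\}$; otherwise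 $U_i=\max\{\frac{a_{kj}-a_{ij}}{a_{ii}a_{kj}-a_{ij}a_{ki}}: j,k\in I_n\setminus\{i\},\ a_{kj}>a_{ij}\}$. Condition $(C_k)$: either $\alpha_kU^{I_n\setminus\{k\}}<1$, or every $x\in\gamma_k\cap[0,U^{I_n\setminus\{k\}}]$ satisfies $\alpha_jx>1$ for all $j\in I_n\setminus\{k\}$. *)

(* Defs.v *)
(* the statement is purely order-theoretic/algebraic, so it is
   stated for an arbitrary real field R (includes the real numbers). *)
From HB Require Import structures.
From mathcomp Require Import all_boot all_order all_algebra.
Set Implicit Arguments. Unset Strict Implicit. Unset Printing Implicit Defensive.
Import Order.TTheory GRing.Theory Num.Theory.
Local Open Scope ring_scope.

Section LV.
Variables (R : realFieldType) (n : nat) (A : 'M[R]_n).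

Definition alpha (i : 'I_n) (x : 'I_n -> R) : R := \sum_(j < n) A i j * x j.

Definition restr (J : {set 'I_n}) (u : 'I_n -> R) : 'I_n -> R :=
  fun i => if i \in J then u i else 0.

Definition Ucomp (i : 'I_n) : R :=
  if [exists j, (j != i) && ((A i i <= A j i) || (A i j == 0))] then (A i i)^-1
  else if [forall j, forall k, ((j != i) && (k != i)) ==> (A j k <= A i k)]
       then 0
  else \big[Num.max/0]_(j | j != i)
         \big[Num.max/0]_(k | (k != i) && (A i j < A k j))
            ((A k j - A i j) / (A i i * A k j - A i j * A k i)).

Definition U : 'I_n -> R := Ucomp.

Definition condC (k : 'I_n) : Prop :=
  alpha k (restr (~: [set k]) U) < 1 \/
  (forall x : 'I_n -> R,
     (forall l, 0 <= x l) -> alpha k x = 1 ->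
     (forall l, x l <= restr (~: [set k]) U l) ->
     forall j, j != k -> 1 < alpha j x).

Definition star (i j : 'I_n) : Prop :=
  Num.max 0 (A i j / A j j * (1 - alpha j (restr (~: [set i; j]) U)))
    < 1 - alpha i (restr (~: [set i; j]) U).

End LV.

(* Main.v *)
Require Import Defs.
From HB Require Import structures.
From mathcomp Require Import all_boot all_order all_algebra.
Import Order.TTheory GRing.Theory Num.Theory.
Local Open Scope ring_scope.
Set Implicit Arguments. Unset Strict Implicit.

Lemma alpha_ext (R : realFieldType) (n : nat) (A : 'M[R]_n) k (x y : 'I_n -> R) :
  (forall l, x l = y l) -> alpha A k x = alpha A k y.
Proof. by move=> h; apply: eq_bigr => l _; rewrite h. Qed.

Lemma alpha_le (R : realFieldType) (n : nat) (A : 'M[R]_n) k (x y : 'I_n -> R) :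
  (forall l, 0 <= A k l) -> (forall l, x l <= y l) -> alpha A k x <= alpha A k y.
Proof. by move=> h1 h2; apply: ler_sum => l _; apply: ler_wpM2l. Qed.

Lemma alpha_ge0 (R : realFieldType) (n : nat) (A : 'M[R]_n) k (x : 'I_n -> R) :
  (forall l, 0 <= A k l) -> (forall l, 0 <= x l) -> 0 <= alpha A k x.
Proof. by move=> h1 h2; apply: sumr_ge0 => l _; apply: mulr_ge0. Qed.

Lemma alpha_upd (R : realFieldType) (n : nat) (A : 'M[R]_n) k j s (w : 'I_n -> R) :
  alpha A k (fun l => if l == j then s else w l) = alpha A k w + A k j * (s - w j).
Proof.
rewrite /alpha (bigD1 j) //= eqxx [in RHS](bigD1 j) //=.
rewrite (eq_bigr (fun l => A k l * w l)); last by move=> l /negbTE ->.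
rewrite mulrBr; set a := A k j * s; set b := A k j * w j; set c := \sum_(_ | _) _.
by rewrite addrAC addrCA subrr addr0 addrC.
Qed.

Lemma alpha_scale (R : realFieldType) (n : nat) (A : 'M[R]_n) k c (w : 'I_n -> R) :
  alpha A k (fun l => c * w l) = c * alpha A k w.
Proof. by rewrite /alpha mulr_sumr; apply: eq_bigr => l _; rewrite mulrCA. Qed.

Lemma U_ge0 (R : realFieldType) (n : nat) (A : 'M[R]_n) j :
  (forall i, 0 < A i i) -> 0 <= U A j.
Proof.
move=> hd; rewrite /U /Ucomp; case: ifP => _; first by rewrite invr_ge0 ltW.
case: ifP => _ //.
exact: bigmax_ge_id.
Qed.

Lemma restr_ge0 (R : realFieldType) (n : nat) (A : 'M[R]_n) S l :
  (forall i, 0 < A i i) -> 0 <= restr S (U A) l.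
Proof. by move=> hd; rewrite /restr; case: ifP => // _; apply: U_ge0. Qed.

Lemma sum_one (R : realFieldType) (n : nat) (F : 'I_n -> R) j :
  (forall l, 0 <= F l) -> F j <= \sum_l F l.
Proof.
move=> h; rewrite (bigD1 j) //= lerDl; exact: sumr_ge0.
Qed.

Lemma sum_two (R : realFieldType) (n : nat) (F : 'I_n -> R) j k :
  (forall l, 0 <= F l) -> j != k -> F j + F k <= \sum_l F l.
Proof.
move=> h hjk; rewrite (bigD1 j) //= lerD2l (bigD1 k) 1?eq_sym //= lerDl.
exact: sumr_ge0.
Qed.

Lemma inv_le1 (R : realFieldType) (a : R) : 1 <= a -> a^-1 <= 1.
Proof.
move=> h; have h0 : 0 < a by exact: lt_le_trans ltr01 h.
by rewrite invr_le1 // ?unitfE ?gt_eqF // ltW.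
Qed.

Lemma scaleC (R : realFieldType) (n : nat) (A : 'M[R]_n) k (w : 'I_n -> R) :
  (forall i j, 0 <= A i j) -> condC A k -> (forall l, 0 <= w l) ->
  (forall l, w l <= restr (~: [set k]) (U A) l) -> 1 <= alpha A k w ->
  forall m, m != k -> alpha A k w < alpha A m w.
Proof.
move=> hnn [hlt|hr] w0 wU h1 m hm.
  have := alpha_le (hnn k) wU; move=> h2.
  by have := le_lt_trans (le_trans h1 h2) hlt; rewrite ltxx.
have hpos : 0 < alpha A k w by exact: lt_le_trans ltr01 h1.
set c := (alpha A k w)^-1.
have c0 : 0 < c by rewrite invr_gt0.
have c1 : c <= 1 by exact: inv_le1.
have := hr (fun l => c * w l).
rewrite alpha_scale /c mulVf ?gt_eqF // => /(_ _ erefl _ m hm).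
rewrite alpha_scale -/c.
have -> : (1 < c * alpha A m w) = (alpha A k w < alpha A m w).
  by rewrite /c mulrC ltr_pdivlMr // mul1r.
apply.
- by move=> l; apply: mulr_ge0; [exact: ltW|].
- move=> l; apply: le_trans (wU l); rewrite ler_piMl //.
Qed.

Lemma I1 (R : comRingType) (a b e u : R) :
  (a - b) * (1 - e * u) = (a - b) + u * (e * b - e * a).
Proof.
rewrite mulrBr mulr1 -mulrBr -[b - a]opprB mulrN mulrN; congr (_ - _).
by rewrite [RHS]mulrCA mulrC -mulrA.
Qed.

Lemma I2 (R : comRingType) (t u a c : R) :
  t - 1 + u * (c - a * t) = (t - 1) * (1 - a * u) + u * (c - a).
Proof.
rewrite I1 -!addrA; congr (_ + _); congr (_ + _).
rewrite -mulrDr; congr (_ * _).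
by rewrite mulr1 [RHS]addrC -addrA addKr.
Qed.

Definition gfun (R : realFieldType) (n : nat) (A : 'M[R]_n) (i j l : 'I_n) : R :=
  A j l - A i l + U A j * (A j j * A i l - A i j * A j l).

Lemma gsum (R : realFieldType) (n : nat) (A : 'M[R]_n) i j (x : 'I_n -> R) :
  \sum_l gfun A i j l * x l =
  alpha A j x - alpha A i x + U A j * (A j j * alpha A i x - A i j * alpha A j x).
Proof.
rewrite /alpha /gfun; set u := U A j.
rewrite (eq_bigr (fun l => A j l * x l - A i l * x l + u * (A j j * (A i l * x l) - A i j * (A j l * x l)))); last first.
  by move=> l _; rewrite !mulrDl mulNr -mulrA mulrBl -!mulrA.
by rewrite big_split /= sumrB -mulr_sumr sumrB -!mulr_sumr.
Qed.

Lemma gjj (R : realFieldType) (n : nat) (A : 'M[R]_n) i j :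
  gfun A i j j = A j j - A i j.
Proof. by rewrite /gfun [A j j * _]mulrC subrr mulr0 addr0. Qed.

Lemma notA_facts (R : realFieldType) (n : nat) (A : 'M[R]_n) j :
  ~~ [exists k, (k != j) && ((A j j <= A k j) || (A j k == 0))] ->
  forall k, k != j -> A k j < A j j /\ A j k != 0.
Proof.
move=> /existsPn h k hk; move: (h k); rewrite hk /= negb_or -ltNge.
by case/andP.
Qed.

Lemma B_facts (R : realFieldType) (n : nat) (A : 'M[R]_n) j :
  [forall j0, forall k, ((j0 != j) && (k != j)) ==> (A j0 k <= A j k)] ->
  forall j0 k, j0 != j -> k != j -> A j0 k <= A j k.
Proof.
by move=> /forallP h j0 k h1 h2; move/forallP: (h j0) => /(_ k); rewrite h1 h2.
Qed.

Lemma U_C (R : realFieldType) (n : nat) (A : 'M[R]_n) j :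
  ~~ [exists k, (k != j) && ((A j j <= A k j) || (A j k == 0))] ->
  ~~ [forall j0, forall k, ((j0 != j) && (k != j)) ==> (A j0 k <= A j k)] ->
  U A j = \big[Num.max/0]_(j0 | j0 != j)
         \big[Num.max/0]_(k | (k != j) && (A j j0 < A k j0))
            ((A k j0 - A j j0) / (A j j * A k j0 - A j j0 * A k j)).
Proof. by move=> /negbTE hA /negbTE hB; rewrite /U /Ucomp hA hB. Qed.

Lemma g_good (R : realFieldType) (n : nat) (A : 'M[R]_n) i j l :
  (forall i j, 0 <= A i j) -> (forall i, 0 < A i i) -> A i j <= A j j ->
  A i l <= A j l -> (A j l - A i l) * (1 - A i j * U A j) <= gfun A i j l.
Proof.
move=> hnn hd hij hl; rewrite I1 /gfun lerD2l.
apply: ler_wpM2l; first exact: U_ge0.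
by apply: lerB => //; apply: ler_wpM2r.
Qed.

Lemma g_ge0 (R : realFieldType) (n : nat) (A : 'M[R]_n) i j :
  (forall i j, 0 <= A i j) -> (forall i, 0 < A i i) -> i != j ->
  ~~ [exists k, (k != j) && ((A j j <= A k j) || (A j k == 0))] ->
  ~~ [forall j0, forall k, ((j0 != j) && (k != j)) ==> (A j0 k <= A j k)] ->
  0 <= 1 - A i j * U A j -> forall l, l != j -> 0 <= gfun A i j l.
Proof.
move=> hnn hd hij hA hB hZ l hl.
have [hij' _] := notA_facts hA hij.
case: (leP (A i l) (A j l)) => h.
  apply: le_trans (g_good hnn hd (ltW hij') h).
  by apply: mulr_ge0 => //; rewrite subr_ge0.
have hT : (A i l - A j l) / (A j j * A i l - A j l * A i j) <= U A j.
  rewrite (U_C hA hB).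
  apply: le_trans (le_bigmax_cond 0 (fun j0 => \big[Num.max/0]_(k | (k != j) && (A j j0 < A k j0))
            ((A k j0 - A j j0) / (A j j * A k j0 - A j j0 * A k j))) hl).
  by apply: (le_bigmax_cond _ (fun k => (A k l - A j l) / (A j j * A k l - A j l * A k j))); rewrite hij h.
have hden : 0 < A j j * A i l - A j l * A i j.
  rewrite subr_gt0; apply: le_lt_trans (_ : A i j * A i l < _).
    by rewrite mulrC; apply: ler_wpM2l => //; exact: ltW.
  by rewrite ltr_pM2r // (le_lt_trans (hnn j l) h).
move: hT; rewrite ler_pdivrMr // => hT.
by rewrite /gfun [A i j * A j l]mulrC -[A j l - A i l]opprB addrC subr_ge0.
Qed.

Lemma claimI (R : realFieldType) (n : nat) (A : 'M[R]_n) i j :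
  (forall i j, 0 <= A i j) -> (forall i, 0 < A i i) -> i != j ->
  0 < A i j -> 0 < 1 - alpha A i (restr (~: [set i; j]) (U A)) ->
  A j j * (1 - alpha A i (restr (~: [set i; j]) (U A))) <=
    A i j * (1 - alpha A j (restr (~: [set i; j]) (U A))) ->
  (1 - alpha A i (restr (~: [set i; j]) (U A))) / A i j <= U A j.
Proof.
move=> hnn hd hij haij.
set W := restr (~: [set i; j]) (U A).
set D := 1 - alpha A i W; set E := 1 - alpha A j W => hD hDE.
have W0 : forall l, 0 <= W l by move=> l; apply: restr_ge0.
have Wj : W j = 0 by rewrite /W /restr !inE eqxx orbT.
have hE1 : E <= 1 by rewrite /E lerBlDr lerDl; apply: alpha_ge0.
have hjpos := hd j.
have haij0 : A i j != 0 by rewrite gt_eqF.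
case hA : [exists k, (k != j) && ((A j j <= A k j) || (A j k == 0))].
  rewrite /U /Ucomp hA ler_pdivrMr // mulrC ler_pdivlMr // mulrC.
  by apply: le_trans hDE _; rewrite ler_piMr // ltW.
have hnA := notA_facts (negbT hA).
have [hij' _] := hnA i hij.
case hB : [forall j0, forall k, ((j0 != j) && (k != j)) ==> (A j0 k <= A j k)].
  exfalso.
  have hBf := B_facts hB.
  have hW : alpha A i W <= alpha A j W.
    apply: ler_sum => l _; case: (eqVneq l j) => [->|hl]; first by rewrite Wj !mulr0.
    by apply: ler_wpM2r; [exact: W0 | exact: hBf].
  have hED : E <= D by rewrite /E /D lerB.
  have hlt1 : A i j * D < A j j * D by rewrite ltr_pM2r.
  have := le_lt_trans hDE (le_lt_trans (ler_wpM2l (ltW haij) hED) hlt1).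
  by rewrite ltxx.
rewrite leNgt; apply/negP => hlt.
set s := D / A i j in hlt *.
have hs0 : 0 <= s by rewrite /s divr_ge0 // ltW.
have has : A i j * s = D by rewrite /s mulrC divfK.
have hZ : 0 <= 1 - A i j * U A j.
  apply: le_trans (_ : 1 - A i j * s <= _).
    by rewrite has /D opprB addrC subrK; apply: alpha_ge0.
  by rewrite lerB // ler_wpM2l // ltW.
set x := fun l => if l == j then s else W l.
have hx0 : forall l, 0 <= x l by move=> l; rewrite /x; case: ifP.
have hai : alpha A i x = 1 by rewrite /x alpha_upd Wj subr0 has /D addrC subrK.
have haj : alpha A j x <= 1.
  rewrite /x alpha_upd Wj subr0 -lerBrDl -/E.
  by rewrite /s mulrA ler_pdivrMr // [E * _]mulrC.
have hg := gsum A i j x.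
rewrite hai mulr1 I2 in hg.
have hlow : gfun A i j j * x j <= \sum_l gfun A i j l * x l.
  apply: sum_one => l; apply: mulr_ge0 => //.
  case: (eqVneq l j) => [->|hl]; first by rewrite gjj subr_ge0 ltW.
  by apply: g_ge0 => //; [exact: negbT hA | exact: negbT hB].
have xj : x j = s by rewrite /x eqxx.
rewrite hg gjj xj in hlow.
have h1 : (alpha A j x - 1) * (1 - A i j * U A j) <= 0.
  by apply: mulr_le0_ge0 => //; rewrite subr_le0.
have h2 : (A j j - A i j) * s <= U A j * (A j j - A i j).
  by apply: le_trans hlow _; rewrite -[X in _ <= X]add0r lerD2r.
move: h2; rewrite mulrC ler_pM2r ?subr_gt0 // => h2.
by have := lt_le_trans hlt h2; rewrite ltxx.
Qed.

Lemma WU_lemma (R : realFieldType) (n : nat) (A : 'M[R]_n) i j m l :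
  (forall i, 0 < A i i) -> (m == i) || (m == j) ->
  restr (~: [set i; j]) (U A) l <= restr (~: [set m]) (U A) l.
Proof.
move=> hd hm; rewrite /restr !inE.
case: (boolP ((l == i) || (l == j))) => hl /=.
  by case: ifP => // _; apply: U_ge0.
have -> : l != m.
  apply/negP => /eqP e; move: hl; rewrite -e in hm; by rewrite hm.
by [].
Qed.

Lemma restr_upd (R : realFieldType) (n : nat) (A : 'M[R]_n) i j l :
  j != i ->
  restr (~: [set i]) (U A) l =
  (fun l => if l == j then U A j else restr (~: [set i; j]) (U A) l) l.
Proof.
move=> hji; rewrite /restr !inE /=.
case: (eqVneq l j) => [->|hl] /=; first by rewrite hji.
by rewrite orbF.
Qed.

Lemma keyI (R : realFieldType) (n : nat) (A : 'M[R]_n) i j :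
  (forall i j, 0 <= A i j) -> (forall i, 0 < A i i) -> i != j ->
  condC A i -> condC A j -> star A i j.
Proof.
move=> hnn hd hij Ci Cj.
have hji : j != i by rewrite eq_sym.
rewrite /star.
set W := restr (~: [set i; j]) (U A).
have W0 : forall l, 0 <= W l by move=> l; apply: restr_ge0.
have Wj : W j = 0 by rewrite /W /restr !inE eqxx orbT.
have hD : 0 < 1 - alpha A i W.
  rewrite subr_gt0 ltNge; apply/negP => h1.
  have WUi : forall l, W l <= restr (~: [set i]) (U A) l.
    by move=> l; apply: WU_lemma => //; rewrite eqxx.
  have WUj : forall l, W l <= restr (~: [set j]) (U A) l.
    by move=> l; apply: WU_lemma => //; rewrite eqxx orbT.
  have h2 := scaleC hnn Ci W0 WUi h1 hji.
  have h3 := scaleC hnn Cj W0 WUj (le_trans h1 (ltW h2)) hij.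
  by have := lt_trans h2 h3; rewrite ltxx.
rewrite gt_max hD /=.
rewrite ltNge; apply/negP => hc.
have haij : 0 < A i j.
  rewrite lt_def hnn andbT; apply/eqP => e; move: hc; rewrite e !mul0r.
  by rewrite leNgt hD.
have hDE : A j j * (1 - alpha A i W) <= A i j * (1 - alpha A j W).
  move: hc; rewrite -(ler_pM2l (hd j)) mulrAC [X in _ <= X -> _]mulrC divfK //.
  by rewrite gt_eqF.
have hsU := claimI hnn hd hij haij hD hDE.
set s := (1 - alpha A i W) / A i j in hsU.
have has : A i j * s = 1 - alpha A i W by rewrite /s mulrC divfK // gt_eqF.
have hs0 : 0 <= s by rewrite /s divr_ge0 // ltW.
case: Ci => [hlt|hr].
  have hU : alpha A i (restr (~: [set i]) (U A)) = alpha A i W + A i j * U A j.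
    by rewrite (alpha_ext A i (fun l => restr_upd A l hji)) alpha_upd -/W Wj subr0.
  move: hlt; rewrite hU; apply/negP; rewrite -leNgt.
  apply: le_trans (_ : alpha A i W + A i j * s <= _).
    by rewrite has addrC subrK.
  by rewrite lerD2l ler_wpM2l // ltW.
have := hr (fun l => if l == j then s else W l).
rewrite !alpha_upd Wj !subr0 has addrC subrK => /(_ _ erefl _ j hji).
have hle : alpha A j W + A j j * s <= 1.
  rewrite -lerBrDl /s mulrA ler_pdivrMr // [_ * A i j]mulrC; exact: hDE.
move=> h.
have e : alpha A j (fun l => if l == j then s else W l) = alpha A j W + A j j * s.
  by rewrite alpha_upd Wj subr0.
have : (1 : R) < 1.
  apply: lt_le_trans hle; rewrite -e; apply: h.
  - by move=> l; case: ifP.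
  - move=> l; case: (eqVneq l j) => [->|hl].
      by rewrite /restr !inE hji.
    by apply: WU_lemma => //; rewrite eqxx.
by rewrite ltxx.
Qed.

Lemma xle (R : realFieldType) (n : nat) (A : 'M[R]_n) i k (x : 'I_n -> R) :
  (forall l, x l <= restr (~: [set i]) (U A) l) ->
  forall l, x l <= (fun l => if l == k then x k else restr (~: [set i; k]) (U A) l) l.
Proof.
move=> hxU l /=; case: (eqVneq l k) => [->//|hl].
have := hxU l; rewrite /restr !inE (negbTE hl) orbF.
by case: (eqVneq l i).
Qed.

Lemma part2 (R : realFieldType) (n : nat) (A : 'M[R]_n) i :
  (forall i j, 0 <= A i j) -> (forall i, 0 < A i i) ->
  (forall j, j != i -> star A i j) -> condC A i.
Proof.
move=> hnn hd hs; right => x hx0 hx1 hxU j hji.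
have hij : i != j by rewrite eq_sym.
have hxi : x i = 0.
  apply/eqP; rewrite eq_le hx0 andbT; have := hxU i.
  by rewrite /restr !inE eqxx.
have Wk0 : forall k l, 0 <= restr (~: [set i; k]) (U A) l.
  by move=> k l; apply: restr_ge0.
have Wkk : forall k, restr (~: [set i; k]) (U A) k = 0.
  by move=> k; rewrite /restr !inE eqxx orbT.
have Wki : forall k, restr (~: [set i; k]) (U A) i = 0.
  by move=> k; rewrite /restr !inE eqxx.
have hD : forall k, k != i -> 0 < 1 - alpha A i (restr (~: [set i; k]) (U A)).
  by move=> k hk; have := hs k hk; rewrite /star gt_max => /andP[].
have hxb : forall k, k != i ->
    1 <= alpha A i (restr (~: [set i; k]) (U A)) + A i k * x k.
  move=> k hk; rewrite -hx1.
  have := alpha_le (hnn i) (xle k hxU); rewrite alpha_upd Wkk subr0; exact.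
have hpos : forall k, k != i -> 0 < A i k.
  move=> k hk; rewrite lt_def hnn andbT; apply/eqP => e.
  have := hxb k hk; rewrite e mul0r addr0 => h.
  by have := hD k hk; rewrite subr_gt0 ltNge h.
have [k hk hmax] : exists2 k, k != i &
    forall l, l != i -> A j l / A i l <= A j k / A i k.
  by case: (@arg_maxP _ R _ j (fun l => l != i) (fun l => A j l / A i l) hji) => k hk hm; exists k => // l hl; apply: hm.
set rk := A j k / A i k.
set Wk := restr (~: [set i; k]) (U A).
have Wkk' : Wk k = 0 := Wkk k.
have Wki' : Wk i = 0 := Wki k.
set sk := (1 - alpha A i Wk) / A i k.
have haik := hpos k hk.
have hsk : A i k * sk = 1 - alpha A i Wk by rewrite /sk mulrC divfK // gt_eqF.
have hsk0 : 0 < sk by rewrite /sk divr_gt0 //; apply: hD.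
set v := fun l => if l == k then sk else Wk l.
have hv0 : forall l, 0 <= v l by move=> l; rewrite /v; case: ifP => _; [exact: ltW | exact: Wk0].
have hva : alpha A i v = 1 by rewrite /v alpha_upd Wkk' subr0 hsk addrC subrK.
have hvx : alpha A j v <= alpha A j x.
  rewrite -subr_ge0 /alpha -sumrB.
  have e : \sum_l rk * (A i l * x l - A i l * v l) = 0.
    by rewrite -mulr_sumr sumrB -/(alpha A i x) -/(alpha A i v) hx1 hva subrr mulr0.
  rewrite -{1}e; apply: ler_sum => l _; rewrite -!mulrBr.
  case: (eqVneq l k) => [->|hlk].
    by rewrite mulrA /rk divfK // gt_eqF.
  have hdl : x l - v l <= 0.
    by rewrite subr_le0 /v (negbTE hlk); have := xle k hxU l; rewrite /= (negbTE hlk).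
  case: (eqVneq l i) => [->|hli].
    by rewrite hxi /v eq_sym (negbTE hk) Wki' subrr !mulr0.
  rewrite mulrA; apply: ler_wnM2r => //.
  have := hmax l hli; rewrite ler_pdivrMr ?hpos // => h.
apply: lt_le_trans hvx.
have rj0 : A j j / A i j <= rk by apply: hmax.
have haij := hpos j hji.
have hvj : alpha A j v = alpha A j Wk + A j k * sk by rewrite /v alpha_upd Wkk' subr0.
case: (eqVneq k j) => [ekj|hkj].
  rewrite hvj; subst k.
  have := hs j hji; rewrite /star gt_max -/Wk => /andP[_ h].
  rewrite -ltrBlDl /sk mulrA ltr_pdivlMr //.
  by move: h; rewrite -(ltr_pM2l (hd j)) mulrAC [X in X < _ -> _]mulrC divfK ?gt_eqF // mulrC.
have hjk : j != k by rewrite eq_sym.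
have vj : v j = U A j.
  by rewrite /v (negbTE hjk) /Wk /restr !inE (negbTE hji) (negbTE hjk).
have vk : v k = sk by rewrite /v eqxx.
have hsum2 : A j j * v j + A j k * v k <= alpha A j v.
  by apply: (sum_two (F := fun l => A j l * v l)) => // l; apply: mulr_ge0.
have ajk : 0 < A j k.
  have : 0 < rk by apply: lt_le_trans rj0; rewrite divr_gt0.
  by rewrite /rk pmulr_lgt0 // invr_gt0.
case hA : [exists k0, (k0 != j) && ((A j j <= A k0 j) || (A j k0 == 0))].
  have Uj : U A j = (A j j)^-1 by rewrite /U /Ucomp hA.
  apply: lt_le_trans hsum2.
  by rewrite vj Uj vk mulfV ?gt_eqF // ltrDl mulr_gt0.
case hB : [forall j0, forall k0, ((j0 != j) && (k0 != j)) ==> (A j0 k0 <= A j k0)].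
  have Uj0 : U A j = 0 by rewrite /U /Ucomp hA hB.
  have xj0 : x j = 0.
    apply/eqP; rewrite eq_le hx0 andbT; have := hxU j.
    by rewrite /restr !inE hji /= Uj0.
  have := hxb j hji; rewrite xj0 mulr0 addr0 => h.
  by have := hD j hji; rewrite subr_gt0 ltNge h.
have hnA := notA_facts (negbT hA).
have [haij_lt _] := hnA i hij.
have hZ : 0 < 1 - A i j * U A j.
  rewrite subr_gt0; apply: lt_le_trans (_ : A i j * v j + A i k * v k <= 1).
    by rewrite vj vk hsk ltrDl; apply: hD.
  by rewrite -hva; apply: (sum_two (F := fun l => A i l * v l)) => // l; apply: mulr_ge0.
have hg := gsum A i j v.
rewrite hva mulr1 I2 in hg.
have hlow : gfun A i j j * v j + gfun A i j k * v k <= \sum_l gfun A i j l * v l.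
  apply: (sum_two (F := fun l => gfun A i j l * v l)) => // l; apply: mulr_ge0 => //.
  case: (eqVneq l j) => [->|hl]; first by rewrite gjj subr_ge0 ltW.
  by apply: g_ge0 => //; [exact: negbT hA | exact: negbT hB | exact: ltW].
have r1 : 1 < rk by apply: lt_le_trans rj0; rewrite ltr_pdivlMr // mul1r.
have aik_lt : A i k < A j k by move: r1; rewrite /rk ltr_pdivlMr // mul1r.
have gk : (A j k - A i k) * (1 - A i j * U A j) <= gfun A i j k.
  by apply: g_good => //; [exact: ltW | exact: ltW].
have gk0 : 0 < gfun A i j k.
  by apply: lt_le_trans gk; rewrite mulr_gt0 // subr_gt0.
rewrite hg gjj vj vk [(_ - _) * U A j]mulrC addrC lerD2r in hlow.
have : 0 < (alpha A j v - 1) * (1 - A i j * U A j).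
  by apply: lt_le_trans hlow; rewrite mulr_gt0.
by rewrite pmulr_lgt0 // subr_gt0.
Qed.

Unset Implicit Arguments. Set Strict Implicit.

Theorem lemma3p2 (R : realFieldType) (n : nat) (A : 'M[R]_n)
  (hn : (2 <= n)%N)
  (hdiag : forall i, 0 < A i i)
  (hnn : forall i j, 0 <= A i j) :
  (forall J : {set 'I_n}, (1 < #|J|)%N ->
     (forall i, i \in J -> condC A i) ->
     forall i j, i \in J -> j \in J -> i != j -> star A i j)
  /\ (forall i, (forall j, j != i -> star A i j) -> condC A i)
  /\ ((forall i, condC A i) <-> (forall i j, i != j -> star A i j)).
Proof.
split; [|split].
- move=> J _ hC i j hi hj hij; apply: keyI => //; exact: hC.
- by move=> i; apply: part2.
- split => [hC i j hij | hS i]; first by apply: keyI.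
  by apply: part2 => // j hj; apply: hS; rewrite eq_sym.
Qed.
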